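(* Let $f(x,y)=\left(x+\frac1y,\ y-\frac1y-x\right)$ be the Hénon–Devaney map, with inverse $f^{-1}(u,v)=\left(u-\frac{1}{u+v},\ u+v\right)$, and write $f^{-k}(t,0)=(f^{-k}_x(t,0),f^{-k}_y(t,0))$ whenever defined. For $n\ge1$ let $S_n$ be the set of $t\in\mathbb{R}$ for which $f^{-n}(t,0)$ is defined and $f^{-j}_y(t,0)>-f^{-j}_x(t,0)$ for all $0\le j\le n-1$, and let $t_n\in S_n$ be a parameter with $f^{-n}_x(t_n,0)=0$. Then the sequence $\left(f^{-n}_y(t_n,0)\right)_{n\in\mathbb{N}}$ diverges.
   Context: Here $f^{0}(t,0)=(t,0)$, so the condition for $j=0$ reads $t>0$; e.g. $t_1=1$. *)

(* Defs.v *)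
From Stdlib Require Import Reals.
Open Scope R_scope.

(* Inverse Henon-Devaney map f^{-1}(u,v) = (u - 1/(u+v), u+v).
   Total function; definedness is tracked separately by [finv_defined]. *)
Definition finv (p : R * R) : R * R :=
  let (u, v) := p in (u - / (u + v), u + v).

Definition finv_iter (k : nat) (t : R) : R * R := Nat.iter k finv (t, 0).

Definition fx (k : nat) (t : R) : R := fst (finv_iter k t).
Definition fy (k : nat) (t : R) : R := snd (finv_iter k t).

Definition finv_defined (n : nat) (t : R) : Prop :=
  forall j : nat, (j < n)%nat -> fx j t + fy j t <> 0.

Definition S_set (n : nat) (t : R) : Prop :=
  finv_defined n t /\
  forall j : nat, (j <= n - 1)%nat -> fy j t > - fx j t.

(* Main.v *)
Require Import Defs.
From Stdlib Require Import Reals Lra Lia Psatz.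
Open Scope R_scope.

Lemma step j t : fx (S j) t = fx j t - / (fx j t + fy j t) /\ fy (S j) t = fx j t + fy j t.
Proof. unfold fx, fy, finv_iter. simpl. destruct (Nat.iter j finv (t,0)); simpl; auto. Qed.

Lemma key (t : R) (n : nat) : (1 <= n)%nat -> S_set n t -> fx n t = 0 ->
  INR n <= fy n t * fy n t /\ 0 < fy n t.
Proof.
  intros Hn [_ H] H0.
  assert (Hs : forall j, (j <= n - 1)%nat -> 0 < fx j t + fy j t).
  { intros j Hj; specialize (H j Hj); lra. }
  assert (L1 : forall m k, (m + k = n)%nat -> fx k t >= 0).
  { induction m; intros k Hk.
    - simpl in Hk; subst; lra.
    - destruct (step k t) as [E _].
      assert (fx (S k) t >= 0) by (apply IHm; lia).
      assert (0 < fx k t + fy k t) by (apply Hs; lia).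
      assert (0 < / (fx k t + fy k t)) by (apply Rinv_0_lt_compat; lra).
      lra. }
  set (M := fx (n-1) t + fy (n-1) t).
  assert (L2 : forall m k, (k + m = n - 1)%nat -> fx k t + fy k t <= M).
  { induction m; intros k Hk.
    - replace k with (n-1)%nat by lia; unfold M; lra.
    - destruct (step k t) as [_ E].
      assert (fx (S k) t + fy (S k) t <= M) by (apply IHm; lia).
      assert (fx (S k) t >= 0) by (apply (L1 (n - S k)%nat); lia).
      lra. }
  assert (HM : 0 < M) by (apply Hs; lia).
  assert (L3 : forall m k, (m + k = n)%nat -> fx k t >= INR m / M).
  { induction m; intros k Hk.
    - simpl in Hk; subst. unfold Rdiv; simpl; lra.
    - destruct (step k t) as [E _].
      assert (fx (S k) t >= INR m / M) by (apply IHm; lia).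
      assert (0 < fx k t + fy k t) by (apply Hs; lia).
      assert (fx k t + fy k t <= M) by (apply (L2 (n - 1 - k)%nat); lia).
      assert (/ M <= / (fx k t + fy k t)) by (apply Rinv_le_contravar; lra).
      rewrite S_INR.
      replace ((INR m + 1) / M) with (INR m / M + / M) by (field; lra).
      lra. }
  assert (A0 : fx 0 t + fy 0 t <= M) by (apply (L2 (n-1)%nat); lia).
  assert (B0 : fx 0 t >= INR n / M) by (apply L3; lia).
  assert (Y : fy n t = M).
  { replace n with (S (n-1)) at 1 by lia. destruct (step (n-1) t) as [_ E]. rewrite E; reflexivity. }
  assert (F0 : fy 0 t = 0) by reflexivity.
  rewrite Y. split; [|lra].
  assert (INR n / M <= M) by lra.
  assert (INR n = INR n / M * M) by (field; lra).
  nra.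
Qed.

Theorem mainTheorem4 :
  forall t : nat -> R,
    (forall n : nat, (1 <= n)%nat -> S_set n (t n) /\ fx n (t n) = 0) ->
    ~ (exists l : R, Un_cv (fun n => fy n (t n)) l).
Proof.
  intros t Ht [l Hl].
  destruct (Hl 1 ltac:(lra)) as [N HN].
  destruct (INR_unbounded ((Rabs l + 1) * (Rabs l + 1))) as [K HK].
  set (n := S (N + K)).
  assert (Hn1 : (1 <= n)%nat) by (unfold n; lia).
  destruct (Ht n Hn1) as [HS Hx].
  destruct (key (t n) n Hn1 HS Hx) as [Q P].
  specialize (HN n ltac:(unfold n; lia)). unfold R_dist in HN.
  assert (INR K <= INR n) by (apply le_INR; unfold n; lia).
  assert (fy n (t n) < Rabs l + 1).
  { pose proof (Rle_abs l). apply Rabs_def2 in HN. lra. }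
  pose proof (Rabs_pos l).
  nra.
Qed.
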